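(* Assume the setting described in the context. Then $(L-1)\mathfrak m=0$ if and only if for all $\theta,\vartheta\in\mathbb R^{\mathfrak d}$ and $\lambda\in[0,1]$ it holds that $\mathcal L_\infty(\lambda\theta+(1-\lambda)\vartheta)\le\lambda\mathcal L_\infty(\theta)+(1-\lambda)\mathcal L_\infty(\vartheta)$.
   Context: Setting. Let $L,\mathfrak d\in\mathbb N=\{1,2,\dots\}$, $(\ell_k)_{k\in\mathbb N_0}\subseteq\mathbb N$, $a\in\mathbb R$, $b\in(a,\infty)$ with $\mathfrak d=\sum_{k=1}^L\ell_k(\ell_{k-1}+1)$; let $\mathbf d_k=\sum_{h=1}^k\ell_h(\ell_{h-1}+1)$ for $k\in\mathbb N_0$. For $\theta=(\theta_1,\dots,\theta_{\mathfrak d})\in\mathbb R^{\mathfrak d}$, $k\in\{1,\dots,L\}$, $i\in\{1,\dots,\ell_k\}$, $j\in\{1,\dots,\ell_{k-1}\}$ let $\mathfrak w^{k,\theta}_{i,j}=\theta_{(i-1)\ell_{k-1}+j+\mathbf d_{k-1}}$ and $\mathfrak b^{k,\theta}_i=\theta_{\ell_k\ell_{k-1}+i+\mathbf d_{k-1}}$, let $\mathfrak w^{k,\theta}=(\mathfrak w^{k,\theta}_{i,j})_{i,j}\in\mathbb R^{\ell_k\times\ell_{k-1}}$, $\mathfrak b^{k,\theta}=(\mathfrak b^{k,\theta}_1,\dots,\mathfrak b^{k,\theta}_{\ell_k})\in\mathbb R^{\ell_k}$, and $\mathcal A^\theta_k(x)=\mathfrak b^{k,\theta}+\mathfrak w^{k,\theta}x$.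 Let $\mathfrak M_\infty(x_1,\dots,x_n)=(\max\{x_1,0\},\dots,\max\{x_n,0\})$ and $\|\cdot\|$ the Euclidean norm. Define $\mathcal N^{k,\theta}_\infty\colon\mathbb R^{\ell_0}\to\mathbb R^{\ell_k}$, $k\in\{1,\dots,L\}$, by $\mathcal N^{1,\theta}_\infty=\mathcal A^\theta_1$ and $\mathcal N^{k+1,\theta}_\infty(x)=\mathcal A^\theta_{k+1}(\mathfrak M_\infty(\mathcal N^{k,\theta}_\infty(x)))$. Let $\mu$ be a measure on the Borel $\sigma$-algebra of $[a,b]^{\ell_0}$ with $\mathfrak m=\mu([a,b]^{\ell_0})\in\mathbb R$, let $f\colon[a,b]^{\ell_0}\to\mathbb R^{\ell_L}$ be measurable, and let $\mathcal L_\infty\colon\mathbb R^{\mathfrak d}\to\mathbb R$, $\mathcal L_\infty(\theta)=\int_{[a,b]^{\ell_0}}\|\mathcal N^{L,\theta}_\infty(x)-f(x)\|^2\,\mu(dx)$ (these integrals are real numbers as part of the setting). *)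

(* Defs.v *)
From HB Require Import structures.
From mathcomp Require Import all_boot all_order all_algebra.
From mathcomp Require Import all_classical all_reals all_analysis.
Set Implicit Arguments. Unset Strict Implicit. Unset Printing Implicit Defensive.
Import Order.TTheory GRing.Theory Num.Theory.
Local Open Scope ring_scope.

(* Fully connected ReLU networks with architecture (l 0, l 1, ..., l L),
   parameter vector theta : 'rV[R]_dd.  All indices below are 0-based:
   the paper's 1-based theta_{n} is (param theta (n-1)). *)

Section Net.
Variable R : realType.
Variable l : nat -> nat.

Definition dk (k : nat) : nat := (\sum_(1 <= h < k.+1) l h * (l h.-1 + 1))%N.

Variable dd : nat.

(* the n-th (0-based) coordinate of theta (0 outside the range, never used) *)
Definition param (theta : 'rV[R]_dd) (n : nat) : R :=
  odflt 0 (omap (fun i : 'I_dd => theta 0 i) (insub n)).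

(* w^{k,theta}_{i+1,j+1} = theta_{i l_{k-1} + (j+1) + d_{k-1}} (1-based) *)
Definition weight (theta : 'rV[R]_dd) (k i j : nat) : R :=
  param theta (i * l k.-1 + j + dk k.-1)%N.

(* b^{k,theta}_{i+1} = theta_{l_k l_{k-1} + (i+1) + d_{k-1}} (1-based) *)
Definition bias (theta : 'rV[R]_dd) (k i : nat) : R :=
  param theta (l k * l k.-1 + i + dk k.-1)%N.

(* A^theta_k (y) = b^{k,theta} + w^{k,theta} y ; vectors are represented as
   nat -> R, only the first l_k (resp. l_{k-1}) entries are meaningful. *)
Definition affine (theta : 'rV[R]_dd) (k : nat) (y : nat -> R) : nat -> R :=
  fun i => bias theta k i + \sum_(j < l k.-1) weight theta k i j * y j.

Definition relu (y : nat -> R) : nat -> R := fun i => Num.max (y i) 0.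

Fixpoint realization (theta : 'rV[R]_dd) (k : nat) (x : nat -> R) : nat -> R :=
  match k with
  | 0 => fun _ => 0 (* unused *)
  | k'.+1 => if k' is 0 then affine theta 1 x
             else affine theta k'.+1 (relu (realization theta k' x))
  end.

End Net.

Definition box (R : realType) (n : nat) (a b : R) : set (n.-tuple R) :=
  [set x | forall i : 'I_n, a <= tnth x i <= b].

Arguments box {R} n a b.

Definition risk (R : realType) (l : nat -> nat) (L dd : nat) (a b : R)
  (mu : {measure set ((l 0%N).-tuple R) -> \bar R})
  (f : (l 0%N).-tuple R -> (l L).-tuple R) (theta : 'rV[R]_dd) : \bar R :=
  \int[mu]_(x in box (l 0%N) a b)
     ((\sum_(i < l L)
        (realization l theta L (fun j => nth 0%R (x : seq R) j) i
         - tnth (f x) i) ^+ 2)%R)%:E.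

(* Main.v *)
Require Import Defs.
From HB Require Import structures.
From mathcomp Require Import all_boot all_order all_algebra.
From mathcomp Require Import all_classical all_reals all_analysis.
From mathcomp Require Import measurable_realfun.
From mathcomp Require Import zify ring lra.
Import Order.TTheory GRing.Theory Num.Theory.
Local Open Scope ring_scope.

Section Aux.
Variable l : nat -> nat.
Hypothesis lpos : forall k, (0 < l k)%N.

Lemma dkS k : dk l k.+1 = (dk l k + l k.+1 * (l k + 1))%N.
Proof. by rewrite /dk big_nat_recr //=. Qed.

Lemma dk_lt m n : (m < n)%N -> (dk l m < dk l n)%N.
Proof.
elim: n => [//|n IH]; rewrite ltnS leq_eqVlt => /orP[/eqP->|/IH h].
  rewrite dkS; have := lpos n.+1; nia.
rewrite dkS; lia.
Qed.

Lemma dk_le m n : (m <= n)%N -> (dk l m <= dk l n)%N.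
Proof. by rewrite leq_eqVlt => /orP[/eqP->//|/(@dk_lt m n)/ltnW]. Qed.

Lemma dk_eq k p m : (dk l k <= p < dk l k.+1)%N ->
  (p == dk l m) = (m == k) && (p == dk l k).
Proof.
move=> /andP[h1 h2]; case: (ltngtP m k) => [mk|km|->]; last by [].
- have := @dk_lt _ _ mk => h; rewrite andFb; apply/negbTE/eqP; lia.
- have := @dk_le _ _ km => h; rewrite andFb; apply/negbTE/eqP; lia.
Qed.
End Aux.

Lemma param_row (R : realType) dd (g : nat -> R) n : (n < dd)%N ->
  param (\row_(i < dd) g i) n = g n.
Proof. by move=> h; rewrite /param insubT /= mxE. Qed.

Lemma param_lin (R : realType) dd (t v : 'rV[R]_dd) (lam : R) n :
  param (lam *: t + (1 - lam) *: v) n = lam * param t n + (1 - lam) * param v n.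
Proof. by rewrite /param; case: insubP => [i _ _|_] /=; rewrite ?mxE ?mulr0 ?addr0. Qed.

Section Net.
Variable R : realType.
Variable l : nat -> nat.
Hypothesis lpos : forall k, (0 < l k)%N.
Variable L : nat.
Hypothesis L2 : (2 <= L)%N.

Definition gWQ (w q : R) (n : nat) : R :=
  if n == (l 1 * l 0)%N then q else if n == dk l L.-1 then w
  else if has (fun k => n == dk l k) (iota 1 (L - 2)) then 1 else 0.

Definition tWQ (w q : R) : 'rV[R]_(dk l L) := \row_(n < dk l L) gWQ w q n.

Lemma gWQ_at w q k p : (k < L)%N -> (dk l k <= p < dk l k.+1)%N ->
  gWQ w q p = if p == (l 1 * l 0)%N then q else if p == dk l k then
     (if k.+1 == L then w else if (1 <= k)%N then 1 else 0) else 0.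
Proof.
move=> kL hp; rewrite /gWQ; case: ifP => // _.
rewrite (@dk_eq l lpos _ _ _ hp) (eq_has (fun m => @dk_eq l lpos _ _ m hp)).
case: (p == dk l k); rewrite ?andbT ?andbF; last first.
  by rewrite (eq_has (a2 := pred0)) ?has_pred0 //; move=> m; rewrite andbF.
rewrite (eq_has (a2 := pred1 k)); last by move=> m /=; rewrite andbT.
rewrite has_pred1 mem_iota.
have [e|ne] := eqVneq k.+1 L.
  by rewrite e (_ : L.-1 == k) //; apply/eqP; lia.
move/eqP: ne => ne.
rewrite (_ : L.-1 == k = false); last by apply/negbTE/eqP; lia.
by rewrite (_ : (k < 1 + (L - 2))%N = true) ?andbT //; apply/idP; lia.
Qed.

Lemma weight_WQ w q k i j : (k < L)%N -> (i < l k.+1)%N -> (j < l k)%N ->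
  weight l (tWQ w q) k.+1 i j =
  if (i == 0%N) && (j == 0%N) then
     (if k.+1 == L then w else if (1 <= k)%N then 1 else 0) else 0.
Proof.
move=> kL il jl; rewrite /weight /= /tWQ.
have hb : (i * l k + j < l k.+1 * l k)%N by nia.
have d1 := @dkS l 0; have d0 : dk l 0 = 0%N by rewrite /dk big_geq.
have hp : (dk l k <= i * l k + j + dk l k < dk l k.+1)%N.
  by rewrite dkS; lia.
have dL := @dk_le l lpos k.+1 L kL.
rewrite param_row; last by lia.
rewrite (@gWQ_at w q k _ kL hp).
have -> : (i * l k + j + dk l k == (l 1 * l 0)%N) = false.
  apply/negbTE/eqP; case: k {kL il jl hp dL} hb => [|k] hb; first by rewrite d0; lia.
  have := lpos 1; have := @dk_le l lpos 1 k.+1 isT; rewrite d1 d0 mulnDr; lia.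
have -> : (i * l k + j + dk l k == dk l k) = (i == 0%N) && (j == 0%N).
  have lk := lpos k; apply/eqP/andP => [|[/eqP-> /eqP->]]; last by lia.
  move=> h1; split; apply/eqP; nia.
by [].
Qed.

Lemma bias_WQ w q k i : (k < L)%N -> (i < l k.+1)%N ->
  bias l (tWQ w q) k.+1 i = if (k == 0%N) && (i == 0%N) then q else 0.
Proof.
move=> kL il; rewrite /bias /= /tWQ.
have d1 := @dkS l 0; have d0 : dk l 0 = 0%N by rewrite /dk big_geq.
have hp : (dk l k <= l k.+1 * l k + i + dk l k < dk l k.+1)%N.
  by rewrite dkS; lia.
have dL := @dk_le l lpos k.+1 L kL.
rewrite param_row; last by lia.
rewrite (@gWQ_at w q k _ kL hp).
have := lpos k; have := lpos k.+1 => p1 p0.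
have -> : (l k.+1 * l k + i + dk l k == dk l k) = false.
  apply/negbTE/eqP; nia.
case: k {kL il hp dL p1 p0} => [|k].
  by rewrite d0 addn0 /=; case: i => [|i]; rewrite ?addn0 ?eqxx //; case: eqP => //; lia.
have := lpos 1; have := @dk_le l lpos 1 k.+1 isT; rewrite d1 d0 mulnDr /= => h h1.
by case: eqP => //; lia.
Qed.

Lemma real_WQ w q x k i : (0 < k <= L)%N -> (i < l k)%N ->
  realization l (tWQ w q) k x i =
  if i == 0%N then (if k == 1%N then q else (if k == L then w else 1) * Num.max q 0)
  else 0.
Proof.
elim: k i => [//|k IH] i /andP[_ kL] il.
case: k IH kL il => [|k] IH kL il.
  rewrite /= /affine bias_WQ // big1 ?addr0; first by case: (i == 0%N).
  move=> j _; rewrite weight_WQ //.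
  have -> : (1 == L) = false by apply/negbTE/eqP; lia.
  by case: ifP => _; rewrite mul0r.
rewrite (_ : realization l (tWQ w q) k.+2 x =
  affine l (tWQ w q) k.+2 (relu (realization l (tWQ w q) k.+1 x))) //.
have h1 : (0 < k.+1 <= L)%N by apply/andP; split=> //; lia.
have r0 := IH 0%N h1 (lpos k.+1).
move: r0; set r := realization l (tWQ w q) k.+1 x => r0.
rewrite /affine bias_WQ // add0r.
rewrite (bigD1 (Ordinal (lpos k.+1))) //= big1 ?addr0; last first.
  move=> j hj; rewrite weight_WQ ?ltn_ord //.
  rewrite (_ : (j == 0%N :> nat) = false) ?andbF ?mul0r //.
  by apply/negbTE; apply: contra hj => /eqP h; apply/eqP/val_inj.
rewrite weight_WQ // /relu r0 /= ?andbT.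
rewrite (_ : (k.+1 == L) = false); last by apply/negbTE/eqP; lia.
case: (i == 0%N); rewrite ?mul0r //.
case: k {IH kL il h1 r0 r} => [|k] //=.
by rewrite mul1r -maxA maxxx.
Qed.

Lemma tWQ_lin (lam w1 q1 w2 q2 : R) :
  lam *: tWQ w1 q1 + (1 - lam) *: tWQ w2 q2 =
  tWQ (lam * w1 + (1 - lam) * w2) (lam * q1 + (1 - lam) * q2).
Proof.
apply/rowP => n; rewrite !mxE /gWQ.
case: ifP => _; first by [].
case: ifP => _; first by [].
by case: ifP => _; rewrite ?mulr1 ?mulr0 ?addr0 // addrC subrK.
Qed.
End Net.

Section Meas.
Local Open Scope classical_set_scope.
Variable R : realType.
Variable l : nat -> nat.
Hypothesis lpos : forall k, (0 < l k)%N.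
Local Notation T := ((l 0%N).-tuple R).

Lemma meas_nth (j : nat) : measurable_fun setT (fun x : T => nth 0 (x : seq R) j).
Proof.
case: (ltnP j (l 0%N)) => h.
  have -> : (fun x : T => nth 0 (x : seq R) j) = (fun x : T => tnth x (Ordinal h)).
    by apply/funext => x; rewrite (tnth_nth 0).
  exact: measurable_tnth.
have -> : (fun x : T => nth 0 (x : seq R) j) = cst 0.
  by apply/funext => x; rewrite nth_default // size_tuple.
exact: measurable_cst.
Qed.

Lemma meas_real dd (th : 'rV[R]_dd) k i : measurable_fun setT
  (fun x : T => realization l th k (fun j => nth 0%R (x : seq R) j) i).
Proof.
elim: k i => [|k IH] i; first exact: measurable_cst.
case: k IH => [|k] IH /=.
  apply: measurable_funD; first exact: measurable_cst.
  apply: measurable_sum => j; apply: measurable_funM; first exact: measurable_cst.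
  exact: meas_nth.
apply: measurable_funD; first exact: measurable_cst.
apply: measurable_sum => j; apply: measurable_funM; first exact: measurable_cst.
apply: measurable_maxr; [exact: IH|exact: measurable_cst].
Qed.

Lemma meas_box (a b : R) : measurable (box (l 0%N) a b : set T).
Proof.
have -> : (box (l 0%N) a b : set T) =
   \bigcap_(k in [set k | (k < l 0%N)%N])
      ((fun x : T => nth 0 (x : seq R) k) @^-1` `[a, b]%classic).
  apply/seteqP; split => x /=.
    by move=> hx k hk /=; rewrite in_itv /= -[k]/(nat_of_ord (Ordinal hk)) -tnth_nth; exact: hx.
  by move=> hx i; have := hx i (ltn_ord i); rewrite /= in_itv /= (tnth_nth 0).
apply: bigcap_measurable; first by exists 0%N; exact: lpos.
move=> k _; rewrite -[X in measurable X]setTI.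
exact: (meas_nth k measurableT _ (measurable_itv `[a, b]%R)).
Qed.
End Meas.

Lemma convsq (R : realType) (lam u v F : R) : 0 <= lam <= 1 ->
  (lam * u + (1 - lam) * v - F) ^+ 2 <= lam * (u - F) ^+ 2 + (1 - lam) * (v - F) ^+ 2.
Proof.
move=> /andP[l0 l1]; rewrite -subr_ge0.
have -> : lam * (u - F) ^+ 2 + (1 - lam) * (v - F) ^+ 2 - (lam * u + (1 - lam) * v - F) ^+ 2
  = lam * (1 - lam) * (u - v) ^+ 2 by ring.
by apply: mulr_ge0; [apply: mulr_ge0 => //; rewrite subr_ge0|exact: sqr_ge0].
Qed.

Theorem corollary2p19 (R : realType) (L : nat) (l : nat -> nat) (dd : nat)
  (a b : R)
  (mu : {measure set ((l 0%N).-tuple R) -> \bar R})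
  (f : (l 0%N).-tuple R -> (l L).-tuple R) :
  (0 < L)%N ->
  (forall k, (0 < l k)%N) ->
  dd = dk l L ->
  a < b ->
  (mu (box (l 0%N) a b) < +oo)%E ->
  measurable_fun (box (l 0%N) a b) f ->
  (forall theta : 'rV[R]_dd, (risk a b mu f theta < +oo)%E) ->
  ((L - 1)%:R * fine (mu (box (l 0%N) a b)) = 0 <->
   (forall (theta vartheta : 'rV[R]_dd) (lam : R), 0 <= lam <= 1 ->
      (risk a b mu f (lam *: theta + (1 - lam) *: vartheta)
       <= lam%:E * risk a b mu f theta + (1 - lam)%:E * risk a b mu f vartheta)%E)).
Proof.
move=> L0 lpos ddE ab mufin mf rfin; subst dd.
set D := box (l 0%N) a b.
have mD : measurable D := @meas_box R l lpos a b.
have m0 : (0 <= mu D)%E := measure_ge0 mu D.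
have mfn : mu D \is a fin_num by rewrite ge0_fin_numE.
have mF : forall i, measurable_fun D (fun x => tnth (f x) i).
  move=> i; exact: (measurableT_comp (measurable_tnth i) mf).
pose H (th : 'rV[R]_(dk l L)) (x : (l 0%N).-tuple R) := \sum_(i < l L)
  (realization l th L (fun j => nth 0 (x : seq R) j) i - tnth (f x) i) ^+ 2.
have H0 : forall th x, 0 <= H th x.
  by move=> th x; apply: sumr_ge0 => i _; exact: sqr_ge0.
have mH : forall th, measurable_fun D (fun x => (H th x)%:E).
  move=> th; apply/measurable_EFinP; apply: measurable_sum => i.
  apply: measurable_funX; apply: measurable_funB; last exact: mF.
  apply: measurable_funTS; exact: meas_real.
have mHr : forall th, measurable_fun D (H th).
  by move=> th; apply/measurable_EFinP; exact: mH.
have riskE : forall th, (risk a b mu f th = \int[mu]_(x in D) (H th x)%:E)%E by [].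
Local Open Scope ereal_scope.
split.
- move=> h0 th vt lam hlam.
  rewrite !riskE.
  move/eqP: h0; rewrite mulf_eq0 => /orP[|/eqP fm0]; last first.
    have mz : mu D = 0 by rewrite -(fineK mfn) fm0.
    by rewrite !null_set_integral // ?mule0 ?adde0.
  rewrite pnatr_eq0 subn_eq0 => L1.
  have L1' : L = 1%N by lia.
  subst L.
  have rl : forall (y : nat -> R) i, realization l (lam *: th + (1 - lam) *: vt) 1 y i =
     (lam * realization l th 1 y i + (1 - lam) * realization l vt 1 y i)%R.
    move=> y i; rewrite /= /affine /bias /weight !param_lin.
    under eq_bigr do rewrite param_lin.
    rewrite !mulrDr !mulr_sumr addrACA -big_split /=; congr (_ + _)%R.
    by apply: eq_bigr => j _; ring.
  have pw : forall x, (H (lam *: th + (1 - lam) *: vt) x <= lam * H th x + (1 - lam) * H vt x)%R.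
    move=> x; rewrite /H !mulr_sumr -big_split; apply: ler_sum => i _.
    have := @convsq _ lam (realization l th 1 (fun j => nth 0%R (x : seq R) j) i)
      (realization l vt 1 (fun j => nth 0%R (x : seq R) j) i) (tnth (f x) i) hlam.
    by rewrite -rl.
  case/andP: hlam => lam0 lam1.
  have lam0' : (0 <= 1 - lam)%R by rewrite subr_ge0.
  apply: le_trans (ge0_le_integral mu mD
     (f2 := fun x => ((lam * H th x)%R%:E + ((1 - lam) * H vt x)%R%:E)) _ (mH _) _ _) _.
  - by move=> x _; rewrite lee_fin.
  - by apply: emeasurable_funD; apply/measurable_EFinP; apply: measurable_funM;
      [exact: measurable_cst|exact: mHr|exact: measurable_cst|exact: mHr].
  - by move=> x _; rewrite -EFinD lee_fin.
  rewrite ge0_integralD //; last 4 first.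
  - by move=> x _; rewrite lee_fin mulr_ge0.
  - apply/measurable_EFinP; apply: measurable_funM; [exact: measurable_cst|exact: mHr].
  - by move=> x _; rewrite lee_fin mulr_ge0.
  - apply/measurable_EFinP; apply: measurable_funM; [exact: measurable_cst|exact: mHr].
  under eq_integral do rewrite EFinM.
  rewrite ge0_integralZl_EFin //; last by move=> x _; rewrite lee_fin.
  under [X in _ + X <= _]eq_integral do rewrite EFinM.
  rewrite ge0_integralZl_EFin //; last by move=> x _; rewrite lee_fin.
- move=> hconv.
  have [L1|L2] : (L = 1)%N \/ (2 <= L)%N by lia.
    by rewrite L1 subnn mul0r.
  pose G (u : R) (x : (l 0%N).-tuple R) := (\sum_(i < l L)
     ((if (i == 0%N :> nat) then u else 0%R) - tnth (f x) i) ^+ 2)%R.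
  pose rho u := \int[mu]_(x in D) (G u x)%:E.
  have G0 : forall u x, (0 <= G u x)%R.
    by move=> u x; apply: sumr_ge0 => i _; exact: sqr_ge0.
  have mG : forall u, measurable_fun D (G u).
    move=> u; apply: measurable_sum => i.
    apply: measurable_funX; apply: measurable_funB; last exact: mF.
    exact: measurable_cst.
  have mGE : forall u, measurable_fun D (fun x => (G u x)%:E).
    by move=> u; apply/measurable_EFinP; exact: mG.
  have rhoE : forall w q, risk a b mu f (@tWQ R l L w q) = rho (w * Num.max q 0)%R.
    move=> w q; rewrite riskE; apply: eq_integral => x _; congr EFin.
    apply: eq_bigr => i _.
    rewrite (@real_WQ R l lpos L L2) ?ltn_ord //; last by rewrite L0 leqnn.
    by rewrite (_ : (L == 1%N) = false) ?eqxx //; apply/negbTE/eqP; lia.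
  have conv : forall w1 q1 w2 q2 lam, (0 <= lam <= 1)%R ->
    rho ((lam * w1 + (1 - lam) * w2) * Num.max (lam * q1 + (1 - lam) * q2) 0)%R <=
    lam%:E * rho (w1 * Num.max q1 0)%R + (1 - lam)%:E * rho (w2 * Num.max q2 0)%R.
    by move=> w1 q1 w2 q2 lam hl; rewrite -!rhoE -tWQ_lin; exact: hconv.
  have h2 : (0 <= (2:R)^-1 <= 1)%R by apply/andP; split; lra.
  have c1 := conv 2%R 0%R 0%R 2%R _ h2.
  have c2 := conv (-2)%R 0%R 0%R 2%R _ h2.
  have e1 : ((2^-1 * 2 + (1 - 2^-1) * 0) * Num.max (2^-1 * 0 + (1 - 2^-1) * 2) 0 = 1 :> R)%R.
    by rewrite max_l; [field|lra].
  have e2 : ((2^-1 * -2 + (1 - 2^-1) * 0) * Num.max (2^-1 * 0 + (1 - 2^-1) * 2) 0 = -1 :> R)%R.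
    by rewrite max_l; [field|lra].
  have z1 : (2 * Num.max 0 0 = 0 :> R)%R by rewrite maxxx mulr0.
  have z2 : (0 * Num.max 2 0 = 0 :> R)%R by rewrite mul0r.
  have z3 : (-2 * Num.max 0 0 = 0 :> R)%R by rewrite maxxx mulr0.
  rewrite e1 z1 z2 in c1; rewrite e2 z3 z2 in c2.
  have r0fin : rho 0%R \is a fin_num.
    rewrite ge0_fin_numE; last by apply: integral_ge0 => x _; rewrite lee_fin.
    by rewrite -z2 -rhoE.
  set r0 := fine (rho 0%R).
  have hr : (2^-1 * r0 + (1 - 2^-1) * r0 = r0 :> R)%R by field.
  rewrite -(fineK r0fin) -!EFinM -EFinD hr in c1 c2.
  have sum := leeD c1 c2.
  have e3 : rho 1%R + rho (-1)%R = (2 * r0)%R%:E + 2%:E * mu D.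
    rewrite /rho -ge0_integralD //; try (by move=> x _; rewrite lee_fin); try exact: mGE.
    transitivity (\int[mu]_(x in D) ((2 * G 0%R x)%R%:E + 2%:E)).
      apply: eq_integral => x _; rewrite -EFinD -EFinD; congr EFin.
      rewrite /G -big_split /= mulr_sumr.
      rewrite (eq_bigr (fun i : 'I_(l L) => 2 * ((if (i == 0%N :> nat) then 0 else 0) - tnth (f x) i) ^+ 2
                 + (if (i == 0%N :> nat) then 2 else 0))%R); last first.
        by move=> i _; case: (i == 0%N :> nat); ring.
      rewrite big_split /=; congr (_ + _)%R.
      rewrite (bigD1 (Ordinal (lpos L))) //= big1 ?addr0 //.
      move=> i hi; rewrite (_ : (i == 0%N :> nat) = false) //.
      by apply/negbTE; apply: contra hi => /eqP h; apply/eqP/val_inj.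
    rewrite ge0_integralD //; try (by move=> x _; rewrite lee_fin ?mulr_ge0);
      try (by apply/measurable_EFinP; apply: measurable_funM; [exact: measurable_cst|exact: mG]);
      try exact: measurable_cst.
    under eq_integral do rewrite EFinM.
    rewrite ge0_integralZl_EFin //; last by move=> x _; rewrite lee_fin.
    rewrite integral_cst // -/(rho 0%R) -(fineK r0fin) -EFinM.
    by [].
  rewrite e3 -(fineK mfn) -EFinM -!EFinD lee_fin in sum.
  have fm0 : (0 <= fine (mu D))%R by rewrite fine_ge0.
  have -> : fine (mu D) = 0%R by lra.
  by rewrite mulr0.
Qed.
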